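(* For every $u\in W^{1,\gamma}(\Omega)$ there exists a unique $\kappa\in\mathbb{R}$ such that \[ \int_{\Gamma_D}(u+\kappa)_+^{\gamma-1}\,ds=\int_{\Gamma_N}j\,ds. \]
   Context: $\Omega\subset\mathbb{R}^d$ is open, bounded, connected, with $C^1$ boundary $\Gamma=\partial\Omega$; $ds$ denotes the surface measure $d\mathcal{H}^{d-1}$. $\Gamma=\overline{\Gamma_D\cup\Gamma_N}$, where $\Gamma_D,\Gamma_N$ are disjoint, nonempty, relatively open $C^1$ $(d-1)$-dimensional manifolds of positive $\mathcal{H}^{d-1}$-measure with $\mathcal{H}^{d-1}(\partial\Gamma_D\cap\partial\Gamma_N)=0$. The boundary values of $u$ are its trace. Exponents: $\alpha>1$, $\beta>0$, $\gamma=\frac{\beta+1}{\beta}\alpha$, $\gamma'=\gamma/(\gamma-1)$. $j\in L^{\gamma'}(\Gamma_N)$ with $j\ge0$, $j\not\equiv0$. $q_+=\max\{q,0\}$. *)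

(* Defs.v *)
From mathcomp Require Import all_boot all_order all_algebra.
From mathcomp Require Import all_classical all_reals all_analysis.
Set Implicit Arguments. Unset Strict Implicit. Unset Printing Implicit Defensive.
Import Order.TTheory GRing.Theory Num.Theory.
Local Open Scope ring_scope.

Definition gam {R : realType} (alpha beta : R) : R := (beta + 1) / beta * alpha.
Definition gamc {R : realType} (alpha beta : R) : R :=
  gam alpha beta / (gam alpha beta - 1).
Definition pos_part {R : realType} (q : R) : R := Num.max q 0.

(* Main.v *)
Require Import Defs.
From mathcomp Require Import all_boot all_order all_algebra.
From mathcomp Require Import all_classical all_reals all_analysis measurable_realfun.
From mathcomp.algebra_tactics Require Import ring lra.
Import Order.TTheory GRing.Theory Num.Theory.
Import numFieldNormedType.Exports.
Local Open Scope classical_set_scope.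
Local Open Scope ring_scope.

Lemma cont0 (R : realType) (p : R) : 0 < p ->
  Num.max t 0 `^ p @[t --> (0:R)] --> (0:R).
Proof.
move=> p0.
  apply/cvgrPdist_lt => e e0.
  have d0 : 0 < e `^ p^-1 by rewrite powR_gt0.
  near=> t.
  rewrite sub0r normrN ger0_norm ?powR_ge0//.
  have : Num.max t 0 < e `^ p^-1.
    rewrite gt_max d0 andbT.
    near: t; exists (e `^ p^-1) => //= x /=; rewrite sub0r normrN; apply: le_lt_trans; exact: ler_norm.
  move=> /(gt0_ltr_powR p0) h; apply: lt_le_trans (h _ _) _.
  - by rewrite nnegrE le_max lexx orbT.
  - by rewrite nnegrE ltW.
  - by rewrite -powRrM mulVf ?gt_eqF// powRr1 ?(ltW e0).
Unshelve. all: by end_near.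
Qed.

Lemma cont_pp (R : realType) (p : R) : 0 < p ->
  continuous (fun t : R => Num.max t 0 `^ p).
Proof.
move=> p0 t0; rewrite /continuous_at.
have [t0n|t0p|t00] := ltgtP t0 0.
- rewrite powR0 ?gt_eqF//.
  apply: cvg_near_cst; near=> t.
  rewrite max_r ?powR0 ?gt_eqF//; apply: ltW; near: t.
  exact: lt_nbhsl.
- rewrite [X in _ --> X](_ : _ = expR (p * ln t0)); last first.
    by rewrite /powR gt_eqF.
  apply: (@cvg_trans _ ((fun t => expR (p * ln t)) @ t0)).
    apply: near_eq_cvg; near=> t.
    rewrite max_l ?ltW ?/powR ?gt_eqF//; near: t; exact: lt_nbhsr.
  apply: (@continuous_comp _ _ _ (fun t => p * ln t) expR); last exact: continuous_expR.
  by apply: cvgM; [exact: cvg_cst | exact: continuous_ln].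
- by subst t0; rewrite powR0 ?gt_eqF//; exact: cont0.
Unshelve. all: by end_near.
Qed.

Lemma powR_le1D (R : realType) (a q r : R) : 0 <= a -> 0 < q -> q <= r ->
  a `^ q <= 1 + a `^ r.
Proof.
move=> a0 q0 qr.
have [a1|a1] := leP a 1.
  have [->|an0] := eqVneq a 0.
    by rewrite powR0 ?gt_eqF// addr_ge0 ?powR_ge0.
  have : a `^ q <= a `^ 0.
    apply: ger_powR; last exact: ltW.
    by rewrite a1 andbT lt0r an0.
  rewrite powRr0 => h; apply: (le_trans h).
  by rewrite lerDl powR_ge0.
apply: (le_trans (ler_powR (ltW a1) qr)).
by rewrite lerDr.
Qed.

Lemma hbound (R : realType) (a k p g : R) : 0 < p -> p <= g ->
  Num.max (a + k) 0 `^ p <= 2 `^ p * (1 + `|a| `^ g) + (2 * `|k|) `^ p.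
Proof.
move=> p0 pg.
have m0 : 0 <= Num.max (a + k) 0 by rewrite le_max lexx orbT.
have mle : Num.max (a + k) 0 <= `|a| + `|k|.
  rewrite ge_max addr_ge0 // andbT.
  exact: le_trans (ler_norm _) (ler_normD _ _).
have [ka|ak] := leP `|k| `|a|.
  have : Num.max (a + k) 0 <= 2 * `|a|.
    by apply: le_trans mle _; rewrite mulr2n mulrDl mul1r lerD2l.
  move=> /(ge0_ler_powR (ltW p0)) => H.
  have H2 := H m0 (mulr_ge0 (ler0n _ _) (normr_ge0 _)).
  apply: le_trans H2 _.
  rewrite powRM ?ler0n //.
  rewrite -[X in X <= _]addr0; apply: lerD; last exact: powR_ge0.
  apply: ler_wpM2l; first exact: powR_ge0.
  exact: powR_le1D.
have : Num.max (a + k) 0 <= 2 * `|k|.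
  by apply: le_trans mle _; rewrite mulr2n mulrDl mul1r lerD2r ltW.
move=> /(ge0_ler_powR (ltW p0)) => H.
have H2 := H m0 (mulr_ge0 (ler0n _ _) (normr_ge0 _)).
apply: le_trans H2 _.
rewrite -[X in X <= _]add0r; apply: lerD => //.
Qed.

Theorem lemma5p5 (R : realType) (d : measure_display) (T : measurableType d)
  (sigma : {measure set T -> \bar R}) (GD GN : set T)
  (alpha beta : R) (j u : T -> R) :
  measurable GD -> measurable GN ->
  GD `&` GN = set0 ->
  sigma (~` (GD `|` GN)) = 0%E ->
  (0 < sigma GD)%E -> (0 < sigma GN)%E ->
  (sigma setT < +oo)%E ->
  1 < alpha -> 0 < beta ->
  (* j in L^{gamma'}(Gamma_N), j >= 0, j not identically 0 *)
  measurable_fun GN j ->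
  (\int[sigma]_(x in GN) ((`|j x| `^ gamc alpha beta)%:E) < +oo)%E ->
  (forall x, GN x -> 0 <= j x) ->
  ~ {ae sigma, forall x, GN x -> j x = 0} ->
  (* u : the boundary trace, an element of L^gamma(Gamma) *)
  measurable_fun setT u ->
  (\int[sigma]_(x in setT) ((`|u x| `^ gam alpha beta)%:E) < +oo)%E ->
  exists! kappa : R,
    (\int[sigma]_(x in GD) ((pos_part (u x + kappa) `^ (gam alpha beta - 1))%:E)
     = \int[sigma]_(x in GN) ((j x)%:E))%E.
Proof.
move=> mGD mGN _ _ sGD _ sfin a1 b0 mj ij j0 jnz mu iu.
have g1 : 1 < gam alpha beta.
  rewrite /gam.
  have h1 : 1 < (beta + 1) / beta.
   rewrite ltr_pdivlMr //; lra.
  nra.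
have gc1 : 1 < gamc alpha beta.
  rewrite /gamc ltr_pdivlMr; lra.
move: (gamc alpha beta) gc1 ij => gc gc1 ij.
move: (gam alpha beta) g1 iu => g g1 iu.
set p := g - 1.
have p0 : 0 < p by rewrite subr_gt0.
have pg : p <= g by rewrite lerBlDr lerDl.
pose h k x := pos_part (u x + k) `^ p.
have h0 k x : 0 <= h k x by exact: powR_ge0.
have hmono k1 k2 x : k1 <= k2 -> h k1 x <= h k2 x.
  move=> k12; rewrite /h /pos_part.
  apply: ge0_ler_powR; first exact: ltW.
  - by rewrite nnegrE le_max lexx orbT.
  - by rewrite nnegrE le_max lexx orbT.
  by rewrite ge_max !le_max lexx orbT andbT lerD2l k12.
have mh k : measurable_fun setT (fun x => (h k x)%:E).
  apply/measurable_EFinP; apply: measurableT_comp (measurable_powR _) _.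
  apply: measurable_maxr; last exact: measurable_cst.
  by apply: measurable_funD => //; exact: measurable_cst.
have icst (D : set T) (r : R) : measurable D -> sigma.-integrable D (fun _ => r%:E).
  move=> mD; apply/integrableP; split; first exact: measurable_cst.
  rewrite (integral_cst sigma mD `|r|%:E).
  apply: lte_mul_pinfty => //.
  apply: le_lt_trans sfin.
  by apply: le_measure => //; rewrite inE.
have iU : sigma.-integrable GD (fun x => (`|u x| `^ g)%:E).
  apply: (integrableS measurableT) => //.
  apply/integrableP; split.
    apply/measurable_EFinP; apply: measurableT_comp (measurable_powR _) _.
    exact: measurableT_comp.
  under eq_integral do rewrite gee0_abs ?lee_fin ?powR_ge0 //.
  exact: iu.
have ih k : sigma.-integrable GD (fun x => (h k x)%:E).
  pose G x := ((2 `^ p)%:E * (1%:E + (`|u x| `^ g)%:E) + ((2 * `|k|) `^ p)%:E)%E.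
  have iG : sigma.-integrable GD G.
    rewrite /G; apply: (@integrableD _ _ _ sigma GD mGD); last exact: icst.
    apply: (@integrableZl _ _ _ sigma GD mGD).
    by apply: (@integrableD _ _ _ sigma GD mGD) => //; exact: icst.
  apply: le_integrable iG => //; first exact: measurable_funTS.
  move=> x _; rewrite /G /= lee_fin (ger0_norm (h0 _ _)) ger0_norm; last first.
    apply: addr_ge0; last exact: powR_ge0.
    apply: mulr_ge0; first exact: powR_ge0.
    by apply: addr_ge0 => //; exact: powR_ge0.
  exact: hbound.
pose F k := (\int[sigma]_(x in GD) (h k x)%:E)%E.
have Ffin k : F k \is a fin_num by exact: integrable_fin_num (ih k).
have Fmono k1 k2 : k1 <= k2 -> (F k1 <= F k2)%E.
  move=> k12; apply: ge0_le_integral => //.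
  - by move=> x _; rewrite lee_fin.
  - exact: measurable_funTS.
  - exact: measurable_funTS.
  - by move=> x _; rewrite lee_fin hmono.
pose c := (\int[sigma]_(x in GN) (j x)%:E)%E.
have ijj : sigma.-integrable GN (fun x => (j x)%:E).
  have iG : sigma.-integrable GN (fun x => (1%:E + (`|j x| `^ gc)%:E)%E).
    apply: (@integrableD _ _ _ sigma GN mGN); first exact: icst.
    apply/integrableP; split.
      apply/measurable_EFinP; apply: measurableT_comp (measurable_powR _) _.
      exact: measurableT_comp.
    under eq_integral do rewrite gee0_abs ?lee_fin ?powR_ge0 //.
    exact: ij.
  apply: le_integrable iG => //; first exact/measurable_EFinP.
  move=> x _; rewrite /= lee_fin [X in _ <= X]ger0_norm; last by apply: addr_ge0 => //; exact: powR_ge0.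
  rewrite -{1}(powRr1 (normr_ge0 (j x))).
  by apply: powR_le1D => //; exact: ltW.
have cfin : c \is a fin_num by exact: integrable_fin_num.
have cpos : (0 < c)%E.
  rewrite lt0e integral_ge0 ?andbT; last by move=> x /j0; rewrite lee_fin.
  apply/negP => /eqP c0; apply: jnz.
  have : ae_eq sigma GN (fun x => (j x)%:E) (cst 0%E).
    apply/ae_eq_integral_abs => //; first exact/measurable_EFinP.
    rewrite -[RHS]c0; apply: eq_integral => x /[!inE] /j0 jx.
    by rewrite gee0_abs // lee_fin.
  apply: filterS => x H /H [].
  done.
have hcvg x (k_ : nat -> R) k : k_ n @[n --> \oo] --> k ->
    h (k_ n) x @[n --> \oo] --> h k x.
  move=> hk; rewrite /h /pos_part.
  have H1 : (u x + k_ n) @[n --> \oo] --> u x + k by apply: cvgD => //; exact: cvg_cst.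
  exact: (continuous_cvg _ (@cont_pp _ p p0 _) H1).
have Fcvg (k_ : nat -> R) k K : k_ n @[n --> \oo] --> k ->
    (forall n, k_ n <= K) -> F (k_ n) @[n --> \oo] --> F k.
  move=> hk hK.
  have f_f : {ae sigma, forall x, GD x ->
      (fun n => (h (k_ n) x)%:E) @ \oo --> (h k x)%:E}.
    apply: aeW => x _; apply: cvg_EFin; first exact: nearW.
    exact: hcvg.
  have f_g : {ae sigma, forall x n, GD x -> (`|(h (k_ n) x)%:E| <= (h K x)%:E)%E}.
    by apply: aeW => x n _; rewrite /= lee_fin ger0_norm ?h0 ?hmono.
  have [_ _ H] := @dominated_convergence _ _ _ sigma GD mGD
    (fun n x => (h (k_ n) x)%:E) (fun x => (h k x)%:E) (fun x => (h K x)%:E)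
    (fun n => measurable_funTS (mh (k_ n))) (measurable_funTS (mh k))
    f_f (ih K) f_g.
  exact: H.
have Flow : exists k, (F k < c)%E.
  apply: contrapT => /forallNP H.
  have f_f : {ae sigma, forall x, GD x ->
      (fun n => (h (- n%:R) x)%:E) @ \oo --> (fun _ => 0%E) x}.
    apply: aeW => x _; apply: cvg_near_cst; near=> n.
    rewrite /h /pos_part max_r ?powR0 ?gt_eqF //.
    rewrite subr_le0 ltW //; near: n; exact: nbhs_infty_gtr.
  have f_g : {ae sigma, forall x n, GD x -> (`|(h (- n%:R) x)%:E| <= (h 0%R x)%:E)%E}.
    by apply: aeW => x n _; rewrite /= lee_fin ger0_norm ?h0 ?hmono // oppr_le0.
  have [_ _ HF] := @dominated_convergence _ _ _ sigma GD mGD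
    (fun n x => (h (- n%:R) x)%:E) (fun x => 0%E) (fun x => (h 0%R x)%:E)
    (fun n => measurable_funTS (mh _)) (measurable_cst _)
    f_f (ih 0%R) f_g.
  have HF0 : F (- n%:R) @[n --> \oo] --> 0%E.
    by rewrite integral0 in HF.
  have : (c <= 0)%E.
    apply: (cvge_ge _ HF0); apply: nearW => n.
    by rewrite leNgt; apply/negP; exact: H.
  by rewrite leNgt cpos.
have Fhigh : exists k, (c <= F k)%E.
  pose A (M : nat) := GD `&` [set x | - M%:R <= u x].
  have mA M : measurable (A M).
    apply: measurableI => //.
    have H := measurable_fun_ler (measurable_cst (- M%:R : R)) mu measurableT.
    have : measurable [set true] by [].
    by move=> /H; rewrite setTI.
  have [M sAM] : exists M, (0 < sigma (A M))%E.
    apply: contrapT => /forallNP H.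
    have H0 M : sigma (A M) = 0%E.
      apply/eqP; rewrite eq_le measure_ge0 andbT leNgt; apply/negP; exact: H.
    have : sigma.-negligible (\bigcup_M A M).
      by apply: negligible_bigcup => M; exists (A M); split => //; exact: mA.
    case=> N [mN N0 HN].
    have : sigma GD = 0%E.
      apply/eqP; rewrite eq_le measure_ge0 andbT -N0; apply: le_measure; rewrite ?inE //.
      move=> x GDx; apply: HN; exists (Num.bound `|u x|)%N => //; split => //=.
      rewrite lerNl.
      have := archi_boundP (normr_ge0 (u x)); rewrite -normrN => H'.
      exact: ltW (le_lt_trans (ler_norm _) H').
    by move=> H1; rewrite H1 ltxx in sGD.
  have sfinA : sigma (A M) \is a fin_num.
    rewrite ge0_fin_numE ?measure_ge0 //; apply: le_lt_trans sfin.
    by apply: le_measure; rewrite ?inE.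
  pose s := fine (sigma (A M)).
  have s0 : 0 < s by apply: fine_gt0; rewrite sAM /= -ge0_fin_numE ?measure_ge0.
  pose y := fine c / s.
  have y0 : 0 <= y by apply: divr_ge0; [apply: fine_ge0; exact: ltW | exact: ltW].
  pose t := y `^ p^-1.
  have t0 : 0 <= t by exact: powR_ge0.
  have tp : t `^ p = y by rewrite /t -powRrM mulVf ?gt_eqF // powRr1.
  exists (M%:R + t).
  rewrite -(fineK cfin) (_ : fine c = t `^ p * s); last by rewrite tp /y mulfVK ?gt_eqF.
  rewrite EFinM (_ : s%:E = sigma (A M)); last by rewrite /s fineK.
  rewrite -(integral_cst sigma (mA M)).
  apply: (@le_trans _ _ (\int[sigma]_(x in A M) (h (M%:R + t) x)%:E)%E); last first.
    apply: ge0_subset_integral => //.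
    - exact: measurable_funTS.
    - by move=> x _; rewrite lee_fin.
    - by move=> x [].
  apply: ge0_le_integral => //.
  - by move=> x _; rewrite lee_fin powR_ge0.
  - exact: measurable_funTS.
  move=> x [_ /= Mx]; rewrite lee_fin /h /pos_part.
  apply: ge0_ler_powR; first exact: ltW.
  - by rewrite nnegrE.
  - by rewrite nnegrE le_max lexx orbT.
  rewrite le_max; apply/orP; left.
  by rewrite addrA lerDr addrC -lerBlDl sub0r.
have key k1 k2 : k1 < k2 -> F k1 = c -> F k2 = c -> False.
  move=> k12 F1 F2.
  pose D x := ((h k2 x)%:E - (h k1 x)%:E)%E.
  have mD : measurable_fun GD D.
    by apply: emeasurable_funB; exact: measurable_funTS.
  have D0 x : (0 <= D x)%E.
    by rewrite /D -EFinB lee_fin subr_ge0 hmono // ltW.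
  have ID : (\int[sigma]_(x in GD) D x = 0)%E.
    rewrite /D integralB //.
    by rewrite -/(F k2) -/(F k1) F1 F2 subee.
  have HD : ae_eq sigma GD D (cst 0%E).
    apply/ae_eq_integral_abs => //.
    rewrite -[RHS]ID; apply: eq_integral => x _; rewrite gee0_abs //.
  have H2 : ae_eq sigma GD (fun x => (h k2 x)%:E) (cst 0%E).
    apply: filterS HD => x Hx GDx.
    have := Hx GDx; rewrite /D /= -EFinB => /eqP; rewrite eqe subr_eq0 => /eqP e21.
    congr EFin; move: e21; rewrite /h /pos_part.
    have [ux|ux] := leP (u x + k2) 0; first by rewrite powR0 ?gt_eqF.
    move=> e21; exfalso.
    have : Num.max (u x + k1) 0 < u x + k2.
      by rewrite gt_max ux andbT ltrD2l.
    move=> /(gt0_ltr_powR p0) H.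
    have n1 : Num.max (u x + k1) 0 \in Num.nneg by rewrite nnegrE le_max lexx orbT.
    have n2 : u x + k2 \in Num.nneg by rewrite nnegrE ltW.
    by have := H n1 n2; rewrite e21 ltxx.
  have : F k2 = 0%E.
    rewrite /F (ae_eq_integral (cst 0%E) _ mGD (measurable_funTS (mh k2)) (measurable_cst _) H2).
    exact: integral0.
  by rewrite F2 => c0; rewrite c0 ltxx in cpos.
pose S := [set k | (F k < c)%E].
have [k0 Sk0] := Flow.
have [K FK] := Fhigh.
have ubS k : S k -> k <= K.
  move=> Sk; rewrite leNgt; apply/negP => Kk.
  have := lt_le_trans Sk (le_trans FK (Fmono _ _ (ltW Kk))).
  by rewrite ltxx.
have hs : has_sup S by split; [exists k0 | exists K => k; exact: ubS].
set ks := sup S.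
have Fle : (F ks <= c)%E.
  apply: (cvge_le _ (Fcvg (fun n => ks - harmonic n) ks (ks + 1) _ _)).
  - apply: nearW => n.
    have [s Ss ls] := sup_adherent (harmonic_gt0 n) hs.
    exact/ltW/(le_lt_trans (Fmono _ _ (ltW ls)) Ss).
  - rewrite -[X in _ --> X]subr0; apply: cvgB; [exact: cvg_cst | exact: cvg_harmonic].
  - by move=> n; have := harmonic_ge0 n (R:=R); lra.
have Fge : (c <= F ks)%E.
  apply: (cvge_ge _ (Fcvg (fun n => ks + harmonic n) ks (ks + 1) _ _)).
  - apply: nearW => n; rewrite leNgt; apply/negP => Sn.
    have := sup_upper_bound hs Sn.
    move=> h2; have h3 : ks + harmonic n <= ks by exact: h2.
    by have := harmonic_gt0 n (R:=R); lra.
  - rewrite -[X in _ --> X]addr0; apply: cvgD; [exact: cvg_cst | exact: cvg_harmonic].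
  - move=> n; rewrite lerD2l /= invf_le1 ?ler1n ?ltr0n //.
suff : exists! k, F k = c by [].
exists ks; split; first by apply/eqP; rewrite eq_le Fle Fge.
move=> k' Fk'.
have [/key|/key|//] := ltgtP ks k'.
- by move=> H; exfalso; apply: H => //; apply/eqP; rewrite eq_le Fle Fge.
- by move=> H; exfalso; apply: H => //; apply/eqP; rewrite eq_le Fle Fge.
Unshelve. all: by end_near.
Qed.
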